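(* Let $N\ge 1$, let $\Delta\subseteq\{0,1\}^N$ and let $g:\Delta\to\{0,1\}$ be a partial Boolean function. Suppose $g$ is computed by an $R$-round deterministic AMPC algorithm with I/O capacity $S$. Then there is a real polynomial $p(x_1,\dots,x_N)$ of degree at most $S^{2R}$ such that $p(x)=g(x)$ for every $x\in\Delta$ and $p(x)\in\{0,1\}$ for every $x\in\{0,1\}^N\setminus\Delta$. In particular, if $g$ is total (i.e. $\Delta=\{0,1\}^N$), then $\deg(g)\le S^{2R}$.
   Context: AMPC model with I/O capacity $S$ (a positive integer). The computation proceeds in rounds $1,\dots,R$, communicating through distributed data stores (DDS) $\mathcal{D}_0,\mathcal{D}_1,\dots,\mathcal{D}_R$. A DDS stores, under each key, a multiset of values (possibly empty); each value is written by a unique machine and duplicates are allowed. On input $x\in\{0,1\}^N$, $\mathcal{D}_0$ consists of the $N$ key-value pairs $(i,x_i)$, $i=1,\dots,N$. In round $r\ge1$, each machine (there may be arbitrarily many machines, each computationally unbounded and deterministic) adaptively makes a sequence of queries to $\mathcal{D}_{r-1}$: each query is a key, the response is the entire multiset of values stored under that key in $\mathcal{D}_{r-1}$ (empty if none), and each query may depend arbitrarily on the keys and responses of the machine's earlier queries in that round. The sum of the total number of values in all responses and the number of queries with empty response is at most $S$; then the machine writes at most $S$ key-value pairs to $\mathcal{D}_r$, as an arbitrary function of its sequence of queries and responses. The multiset stored under key $k$ in $\mathcal{D}_r$ is the multiset union of all values written under $k$ in round $r$. The algorithm is run on all inputs $x\in\{0,1\}^N$ (including invalid ones $x\notin\Delta$),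 where a machine whose budget would be exceeded stops querying and writes nothing; it is required that in every round, on every input in $\{0,1\}^N$, at most $S$ values are written under any single key. The algorithm computes $g$ in $R$ rounds if for every $x\in\Delta$, $\mathcal{D}_R$ contains exactly the single key-value pair $(\textsc{answer},g(x))$. For a total Boolean function $g:\{0,1\}^N\to\{0,1\}$, $\deg(g)$ is the degree of the unique multilinear real polynomial agreeing with $g$ on $\{0,1\}^N$. *)

(* Defs.v *)
From HB Require Import structures.
From mathcomp Require Import all_boot all_order all_algebra.
From mathcomp Require Import reals.
From mathcomp Require Import mpoly.
Set Implicit Arguments. Unset Strict Implicit. Unset Printing Implicit Defensive.

(* AMPC model.  Keys and values are drawn from the countable universe  *)
(* nat.  A multiset of values is represented canonically as a sorted   *)
(* list (sort leq), so a machine cannot observe any ordering beyond    *)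
(* the multiset itself.                                                 *)

(* A distributed data store: key |-> multiset (sorted list) of values. *)
Definition dds := nat -> seq nat.

Inductive action :=
  | Query of nat
  | Output of seq (nat * nat).

Definition strategy := seq (nat * seq nat) -> action.

Definition resp_cost (r : seq nat) : nat := maxn 1 (size r).

(* Execution of a machine on a store D with budget S; [None] means the
   budget would be exceeded, in which case the machine writes nothing.
   Every query costs at least 1, so fuel S.+2 is never exhausted before
   either an output or a budget overflow happens. *)
Fixpoint exec_fuel (S : nat) (D : dds) (st : strategy) (fuel : nat)
    (hist : seq (nat * seq nat)) (cost : nat) : option (seq (nat * nat)) :=
  match fuel with
  | 0 => None
  | fuel'.+1 =>
    match st hist with
    | Output w => Some w
    | Query k =>
        let c := cost + resp_cost (D k) in
        if S < c then None
        else exec_fuel S D st fuel' (rcons hist (k, D k)) c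
    end
  end.

Definition exec (S : nat) (D : dds) (st : strategy) : option (seq (nat * nat)) :=
  exec_fuel S D st S.+2 [::] 0.

Definition writes (S : nat) (D : dds) (st : strategy) : seq (nat * nat) :=
  odflt [::] (exec S D st).

(* An AMPC algorithm: in round r there are [nmach r] machines (numbered
   0 .. nmach r - 1), machine m following strategy [strat r m]. *)
Record ampc_alg := AMPCAlg {
  nmach : nat -> nat;
  strat : nat -> nat -> strategy
}.

Definition round_writes (S : nat) (A : ampc_alg) (r : nat) (D : dds)
  : seq (nat * nat) :=
  flatten [seq writes S D (strat A r m) | m <- iota 0 (nmach A r)].

Definition dds_of (w : seq (nat * nat)) : dds :=
  fun k => sort leq [seq p.2 | p <- w & p.1 == k].

(* Initial store D_0: key i.+1 holds x_i (as 0/1), for the 0-based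
   index i < N; all other keys are empty. *)
Definition D0 (N : nat) (x : {ffun 'I_N -> bool}) : dds :=
  fun k => match k with
           | 0 => [::]
           | i.+1 => if insub i is Some j then [:: nat_of_bool (x j)] else [::]
           end.

Fixpoint dds_at (N S : nat) (A : ampc_alg) (x : {ffun 'I_N -> bool}) (r : nat)
  : dds :=
  match r with
  | 0 => D0 x
  | r'.+1 => dds_of (round_writes S A r (dds_at S A x r'))
  end.

Definition ampc_valid (N S R : nat) (A : ampc_alg) : Prop :=
  forall (x : {ffun 'I_N -> bool}) (r : nat), 1 <= r <= R ->
    (forall m, m < nmach A r ->
       size (writes S (dds_at S A x r.-1) (strat A r m)) <= S) /\
    (forall k, size (dds_at S A x r k) <= S).

Definition ampc_computes (N S R : nat) (A : ampc_alg) (ans : nat)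
    (Delta : {set {ffun 'I_N -> bool}}) (g : {ffun 'I_N -> bool} -> bool) : Prop :=
  forall x, x \in Delta ->
    forall k, dds_at S A x R k = if k == ans then [:: nat_of_bool (g x)] else [::].

Definition bool_pt (R : realType) (N : nat) (x : {ffun 'I_N -> bool}) : 'I_N -> R :=
  fun i => ((nat_of_bool (x i))%:R)%R.

Definition multilinear (R : realType) (N : nat) (p : {mpoly R[N]}) : Prop :=
  forall m, m \in msupp p -> forall i, (m i <= 1)%N.

(* Main.v *)
Require Import Defs.
From HB Require Import structures.
From mathcomp Require Import all_boot all_order all_algebra.
From mathcomp Require Import reals.
From mathcomp Require Import mpoly.
From mathcomp Require Import zify ring lra.
Import GRing.Theory Num.Theory.
Local Open Scope ring_scope.
Set Implicit Arguments. Unset Strict Implicit. Unset Printing Implicit Defensive.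

Section Rep.
Variable (R : realType) (N : nat).
Local Notation cube := {ffun 'I_N -> bool}.

Definition ind (b : bool) : R := (nat_of_bool b)%:R.

Definition rep (d : nat) (F : cube -> R) :=
  exists p : {mpoly R[N]}, (msize p <= d.+1)%N /\ forall x, p.@[bool_pt R x] = F x.

Definition brep d (f : cube -> bool) := rep d (fun x => ind (f x)).

Lemma rep_ext d F G : (forall x, F x = G x) -> rep d F -> rep d G.
Proof. by move=> E [p [Hs Hp]]; exists p; split=> // x; rewrite Hp E. Qed.

Lemma rep_le d d' F : (d <= d')%N -> rep d F -> rep d' F.
Proof. by move=> le [p [Hs Hp]]; exists p; split=> //; apply: leq_trans Hs _. Qed.

Lemma rep_cst d c : rep d (fun _ => c).
Proof.
exists c%:MP; split; last by move=> x; rewrite mevalC.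
by rewrite msizeC; case: (c != 0).
Qed.

Lemma rep_var i : rep 1 (fun x => ind (x i)).
Proof.
exists 'X_i; split; last by move=> x; rewrite mevalXU.
by rewrite msizeX mdeg1.
Qed.

Lemma rep_add a b F G : rep a F -> rep b G -> rep (maxn a b) (fun x => F x + G x).
Proof.
move=> [p [Hp Ep]] [q [Hq Eq]]; exists (p + q); split.
  apply: leq_trans (msizeD_le _ _) _.
  move: Hp Hq; lia.
by move=> x; rewrite mevalD Ep Eq.
Qed.

Lemma rep_opp a F : rep a F -> rep a (fun x => - F x).
Proof.
move=> [p [Hp Ep]]; exists (- p); split; first by rewrite msizeN.
by move=> x; rewrite mevalN Ep.
Qed.

Lemma rep_mul a b F G : rep a F -> rep b G -> rep (a + b) (fun x => F x * G x).
Proof.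
move=> [p [Hp Ep]] [q [Hq Eq]]; exists (p * q); split; last first.
  by move=> x; rewrite mevalM Ep Eq.
have [->|nzp] := eqVneq p 0; first by rewrite mul0r msize0.
have [->|nzq] := eqVneq q 0; first by rewrite mulr0 msize0.
rewrite msizeM // -subn1 leq_subLR; apply: leq_trans (leq_add Hp Hq) _; lia.
Qed.

Lemma rep_sum (I : Type) (r : seq I) d (F : I -> cube -> R) :
  (forall i, rep d (F i)) -> rep d (fun x => \sum_(i <- r) F i x).
Proof.
move=> H; elim: r => [|i r IH].
  by apply: rep_ext (rep_cst d 0) => x; rewrite big_nil.
apply: rep_ext (rep_le _ (rep_add (H i) IH)); last by rewrite maxnn.
by move=> x; rewrite big_cons.
Qed.

Lemma rep_case (T : eqType) (f : cube -> T) (G : T -> cube -> R) a b :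
  (forall y, brep a (fun x => f x == f y)) ->
  (forall y, rep b (G (f y))) ->
  rep (a + b) (fun x => G (f x) x).
Proof.
move=> Hf HG.
pose r := undup [seq f y | y <- enum {: cube}].
have E : forall x, G (f x) x = \sum_(v <- r) ind (f x == v) * G v x.
  move=> x; have xr : f x \in r by rewrite mem_undup; apply: map_f; rewrite mem_enum.
  rewrite (bigD1_seq (f x)) ?undup_uniq //= eqxx mul1r big1 ?addr0 // => v.
  by rewrite eq_sym => /negbTE ->; rewrite mul0r.
apply: rep_ext (fun x => esym (E x)) _.
pose F := fun v x => if v \in r then ind (f x == v) * G v x else 0.
apply: rep_ext (rep_sum r (F := F) _).
  by move=> x; apply: eq_big_seq => v vr; rewrite /F vr.
move=> v; rewrite /F; case vr: (v \in r); last exact: rep_cst.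
move: vr; rewrite mem_undup => /mapP [y _ ->].
exact: rep_mul (Hf y) (HG y).
Qed.


Lemma ind_true : ind true = 1. Proof. by []. Qed.
Lemma ind_false : ind false = 0. Proof. by []. Qed.

Lemma ind_not b : ind (~~ b) = 1 - ind b.
Proof. by case: b; rewrite /ind /= ?subrr ?subr0. Qed.

Lemma brep_not d f : brep d f -> brep d (fun x => ~~ f x).
Proof.
move=> H; apply: rep_ext (rep_le _ (rep_add (rep_cst 0 1) (rep_opp H))).
  by move=> x; rewrite ind_not.
by rewrite max0n.
Qed.

Lemma brep_bit j b : brep 1 (fun x : cube => x j == b).
Proof.
case: b.
  by apply: rep_ext (rep_var j) => x; rewrite eqb_id.
apply: rep_ext (brep_not (f := fun x : cube => x j) (rep_var j)) => x.
by rewrite eqbF_neg.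
Qed.

Lemma brep_D0 k v : brep 1 (fun x : cube => D0 x k == v).
Proof.
case: k => [|i]; first exact: (rep_cst _ (ind ([::] == v))).
rewrite /D0; case: insubP => [j _ _|_]; last exact: (rep_cst _ (ind ([::] == v))).
apply: (rep_case (f := fun x : cube => x j) (G := fun b _ => ind ([:: nat_of_bool b] == v)) (a := 1) (b := 0)).
  by move=> y; exact: brep_bit.
by move=> y; exact: rep_cst.
Qed.

Variable (S : nat).

Lemma resp_cost_gt0 r : (0 < resp_cost r)%N.
Proof. by rewrite /resp_cost leq_max. Qed.

Lemma rep_exec (D : cube -> dds) c :
  (forall k v, brep c (fun x => D x k == v)) ->
  forall (st : strategy) (P : option (seq (nat * nat)) -> bool) fuel hist cost,
  brep ((S - cost) * c) (fun x => P (exec_fuel S (D x) st fuel hist cost)).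
Proof.
move=> HD st P fuel; elim: fuel => [|fuel IH] hist cost /=; first exact: rep_cst.
case: (st hist) => [k|w]; last exact: rep_cst.
have [leS|ltS] := leqP S cost.
  apply: rep_ext (rep_cst _ (ind (P None))) => x.
  by rewrite ifT //; have := resp_cost_gt0 (D x k); lia.
pose G := fun (v : seq nat) (x : cube) => ind (P (if (S < cost + resp_cost v)%N then None
   else exec_fuel S (D x) st fuel (rcons hist (k, v)) (cost + resp_cost v))).
apply: rep_le (rep_case (f := fun x => D x k) (G := G) (a := c) (b := ((S - cost).-1 * c)%N) _ _).
  by move: ltS; rewrite -subn_gt0; case: (S - cost)%N => // n _; rewrite mulSn.
  by move=> y; exact: HD.
move=> y; rewrite /G; case H: (S < cost + resp_cost (D y k))%N.
  by apply: rep_ext (rep_cst _ (ind (P None))) => x.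
apply: rep_ext (rep_le _ (IH (rcons hist (k, D y k)) (cost + resp_cost (D y k)))).
  by [].
apply: leq_mul => //; have := resp_cost_gt0 (D y k); lia.
Qed.

Lemma rep_config (L : nat -> cube -> seq nat) e :
  (forall m l0, brep e (fun x => L m x == l0)) ->
  forall (ms : seq nat) j (ks : seq (seq nat)), exists G : cube -> R, rep (j * e) G /\
    forall x, (count (fun m => L m x != [::]) ms <= j)%N ->
      G x = ind ([seq L m x | m <- ms] == ks).
Proof.
move=> HL ms; elim: ms => [|m ms IH] j ks.
  by exists (fun _ => ind ([::] == ks)); split; [exact: rep_cst | by []].
case: ks => [|k0 ks].
  by exists (fun _ => 0); split; [exact: rep_cst | by move=> x _; rewrite /ind].
have [-> | nk0] := eqVneq k0 [::].
  case: j => [|j].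
    have [G [HG EG]] := IH 0%N ks; exists G; split => // x /=.
    case E: (L m x == [::]) => //= Hc.
    by rewrite EG // eqseq_cons E.
  have [G1 [H1 E1]] := IH j.+1 ks; have [G2 [H2 E2]] := IH j ks.
  exists (fun x => G1 x - ind (L m x != [::]) * G2 x); split.
    apply: rep_le (rep_add H1 (rep_opp (rep_mul (brep_not (HL m [::])) H2))).
    by rewrite mulSn maxnn.
  move=> x /=; rewrite eqseq_cons; case E: (L m x == [::]) => /= Hc.
    by rewrite E1 // ind_false mul0r subr0.
  rewrite E1; last exact: leqW. have HH := E2 x Hc.
by rewrite ind_true mul1r HH subrr.
case: j => [|j].
  exists (fun _ => 0); split; first exact: rep_cst.
  move=> x /=; case E: (L m x == [::]) => //= _.
  rewrite eqseq_cons (eqP E) eq_sym (negbTE nk0) /=; by rewrite /ind.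
have [G [HG EG]] := IH j ks.
exists (fun x => ind (L m x == k0) * G x); split.
  by rewrite mulSn; exact: rep_mul (HL m k0) HG.
move=> x /=; rewrite eqseq_cons; case E: (L m x == k0) => /=.
  rewrite (eqP E) nk0 /= => Hc.
  by rewrite EG // ind_true mul1r.
by move=> _; rewrite ind_false mul0r.
Qed.

Lemma count_flatten_le (I : Type) (F : I -> seq nat) (ms : seq I) :
  (count (fun m => F m != [::]) ms <= size (flatten [seq F m | m <- ms]))%N.
Proof.
elim: ms => //= m ms IH; rewrite size_cat; case: (F m) => //= a l; lia.
Qed.

Lemma rep_round (A : ampc_alg) r (D : cube -> dds) c :
  (forall k v, brep c (fun x => D x k == v)) ->
  (forall x k, size (dds_of (round_writes S A r (D x)) k) <= S)%N ->
  forall k v, brep (S * (S * c)) (fun x => dds_of (round_writes S A r (D x)) k == v).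
Proof.
move=> HD Hsz k v.
pose L := fun m x => [seq p.2 | p <- writes S (D x) (strat A r m) & p.1 == k].
have HL : forall m l0, brep (S * c) (fun x => L m x == l0).
  move=> m l0.
  have := rep_exec HD (strat A r m)
    (fun o => [seq p.2 | p <- odflt [::] o & p.1 == k] == l0) S.+2 [::] 0.
  by rewrite subn0.
pose ms := iota 0 (nmach A r).
have E : forall x, dds_of (round_writes S A r (D x)) k
                   = sort leq (flatten [seq L m x | m <- ms]).
  move=> x; rewrite /dds_of /round_writes filter_flatten map_flatten -!map_comp.
  by [].
apply: rep_ext (fun x => esym (congr1 (fun s => ind (s == v)) (E x))) _.
apply: rep_le (rep_case (f := fun x => [seq L m x | m <- ms])
   (G := fun ks _ => ind (sort leq (flatten ks) == v)) (a := (S * (S * c))%N) (b := 0%N) _ _).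
  by rewrite addn0.
  move=> y; have [G [HG EG]] := rep_config HL ms S [seq L m y | m <- ms].
  apply: rep_ext HG => x; rewrite EG //.
  apply: leq_trans (count_flatten_le _ _) _.
  by rewrite -(size_sort leq) -E Hsz.
by move=> y; exact: rep_cst.
Qed.

Lemma rep_rounds (A : ampc_alg) Rounds : ampc_valid N S Rounds A ->
  forall r, (r <= Rounds)%N -> forall k v,
    brep (S ^ (2 * r)) (fun x => dds_at S A x r k == v).
Proof.
move=> Hv; elim=> [|r IH] Hr k v.
  by rewrite muln0 expn0; exact: brep_D0.
have -> : (S ^ (2 * r.+1) = S * (S * S ^ (2 * r)))%N.
  by rewrite -!expnS; congr (S ^ _)%N; lia.
apply: (rep_round (D := fun x => dds_at S A x r)).
  by apply: IH; lia.
move=> x k'; have [_ H] := Hv x r.+1 (ltac:(apply/andP; split => //)).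
exact: H.
Qed.

End Rep.

Section Uniq.
Variable (R : realType) (N : nat).
Local Notation cube := {ffun 'I_N -> bool}.
Local Notation ind := (@ind R).

Definition wt (s x : cube) : R :=
  \prod_i (if s i then (if x i then 1 else -1) else (if x i then 0 else 1)).
Definition Dlt (s : cube) (F : cube -> R) := \sum_(x : cube) wt s x * F x.

Lemma prod_ind (P : 'I_N -> bool) : \prod_i ind (P i) = ind [forall i, P i].
Proof.
case: (boolP [forall i, P i]) => H.
  by rewrite big1 // => i _; rewrite (forallP H).
have [i Hi] : exists i, ~~ P i by apply/existsP; rewrite -negb_forall.
by rewrite (bigD1 i) //= (negbTE Hi) !ind_false mul0r.
Qed.

Lemma mono_eval (x : cube) (m : 'X_{1..N}) :
  \prod_i (bool_pt R x i) ^+ (m i) = \prod_i (if x i then 1 else ind (m i == 0%N)).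
Proof.
apply: eq_bigr => i _; rewrite /bool_pt; case: (x i) => /=.
  by rewrite expr1n.
by rewrite expr0n.
Qed.

Lemma Dlt_mono s (m : 'X_{1..N}) :
  Dlt s (fun x => \prod_i (bool_pt R x i) ^+ (m i)) = ind [forall i, s i == (m i != 0%N)].
Proof.
rewrite /Dlt.
under eq_bigr do rewrite mono_eval /wt -big_split /=.
rewrite -(bigA_distr_bigA (fun i b =>
  (if s i then (if b then 1 else -1) else (if b then 0 else 1)) *
  (if b then 1 else ind (m i == 0%N)))) -prod_ind.
apply: eq_bigr => i _; rewrite big_bool /=.
case: (s i); case: (m i == 0%N); rewrite /= ?ind_true ?ind_false; lra.
Qed.

Lemma Dlt_poly s (p : {mpoly R[N]}) :
  Dlt s (fun x => p.@[bool_pt R x]) =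
  \sum_(m <- msupp p) p@_m * ind [forall i, s i == (m i != 0%N)].
Proof.
rewrite /Dlt.
under eq_bigr do rewrite mevalE mulr_sumr.
rewrite exchange_big /=; apply: eq_bigr => m _.
rewrite -Dlt_mono /Dlt mulr_sumr; apply: eq_bigr => x _.
by rewrite mulrCA.
Qed.

Lemma Dlt_small (p : {mpoly R[N]}) D (s : cube) :
  (msize p <= D.+1)%N -> (D < \sum_i (s i : nat))%N ->
  Dlt s (fun x => p.@[bool_pt R x]) = 0.
Proof.
move=> Hp Hs; rewrite Dlt_poly big1_seq // => m /andP [_ Hm].
case: (boolP [forall i, s i == (m i != 0%N)]) => H; last by rewrite ind_false mulr0.
exfalso.
have h1 := msize_mdeg_lt Hm.
have h2 : (\sum_i (s i : nat) <= mdeg m)%N.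
  rewrite mdegE; apply: leq_sum => i _; rewrite (eqP (forallP H i)).
  by case: (m i).
lia.
Qed.

Lemma multilinear_uniq (p q : {mpoly R[N]}) D :
  (msize p <= D.+1)%N -> multilinear q ->
  (forall x, q.@[bool_pt R x] = p.@[bool_pt R x]) -> (msize q <= D.+1)%N.
Proof.
move=> Hp Hq E; rewrite msizeE; apply/bigmax_leqP_seq => m Hm _.
rewrite ltnS leqNgt; apply/negP => Hlt.
pose s : cube := [ffun i => m i != 0%N].
have Hsum : (\sum_i (s i : nat))%N = mdeg m.
  rewrite mdegE; apply: eq_bigr => i _; rewrite /s ffunE.
  by have := Hq m Hm i; case: (m i) => [|[]].
have H0 : Dlt s (fun x => q.@[bool_pt R x]) = 0.
  rewrite /Dlt; under eq_bigr do rewrite E.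
  by apply: (Dlt_small Hp); rewrite Hsum.
move: H0; rewrite Dlt_poly (bigD1_seq m) ?msupp_uniq //= big1_seq.
  rewrite addr0.
  have -> : [forall i, s i == (m i != 0%N)] by apply/forallP => i; rewrite /s ffunE.
  rewrite ind_true mulr1 => /eqP; rewrite mcoeff_msupp in Hm.
  by rewrite (negbTE Hm).
move=> m' /andP [Hne Hm'].
case: (boolP [forall i, s i == (m' i != 0%N)]) => H; last by rewrite ind_false mulr0.
exfalso; move/negP: Hne; apply; apply/eqP/mnmP => i.
have := eqP (forallP H i); rewrite /s ffunE.
have := Hq m Hm i; have := Hq m' Hm' i.
case: (m i) => [|[|]] //; case: (m' i) => [|[|]] //.
Qed.

End Uniq.

Theorem theorem3p2 (R : realType) (N S Rounds : nat) (ans : nat)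
    (Delta : {set {ffun 'I_N -> bool}}) (g : {ffun 'I_N -> bool} -> bool)
    (A : ampc_alg) :
  (1 <= N)%N -> (0 < S)%N ->
  ampc_valid N S Rounds A ->
  ampc_computes S Rounds A ans Delta g ->
  (exists p : {mpoly R[N]},
      (msize p <= (S ^ (2 * Rounds)).+1)%N /\
      (forall x, x \in Delta -> p.@[bool_pt R x] = (nat_of_bool (g x))%:R) /\
      (forall x, x \notin Delta -> p.@[bool_pt R x] = 0 \/ p.@[bool_pt R x] = 1))
  /\
  (Delta = [set: {ffun 'I_N -> bool}] ->
     forall q : {mpoly R[N]}, multilinear q ->
       (forall x, q.@[bool_pt R x] = (nat_of_bool (g x))%:R) ->
       (msize q <= (S ^ (2 * Rounds)).+1)%N).
Proof.
move=> HN HS Hv Hc.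
have [p [Hp Ep]] := @rep_rounds R N S A Rounds Hv Rounds (leqnn _) ans [:: 1%N].
have HpD : forall x, x \in Delta -> p.@[bool_pt R x] = (nat_of_bool (g x))%:R.
  by move=> x Hx; rewrite Ep (Hc x Hx ans) eqxx; case: (g x).
split.
  exists p; split => //; split => // x _; rewrite Ep.
  by case: (_ == _); [right|left].
move=> HD q Hq Eq; apply: (multilinear_uniq Hp Hq) => x.
by rewrite Eq HpD // HD inE.
Qed.
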